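(* Let ${\cal X}$ be a real Hilbert space, $0\le\tau_{\min}\le\tau_{\max}\le\infty$ and $\mathrm{proj}(t):=\min\{\max\{t,\tau_{\min}\},\tau_{\max}\}$ for $t\in\mathbb{R}$. Let $s,z\in{\cal X}$ with $s\ne0$, set $\rho:=z^Ts$, $$\lambda:=\frac{\|s\|^2+\|z\|^2-\sqrt{(\|s\|^2-\|z\|^2)^2+4\rho^2}}{2},$$ and $$\tau^s:=\mathrm{proj}\Big(\frac{\rho}{\|s\|^2}\Big),\quad\tau^g:=\mathrm{proj}\Big(\frac{\|z\|}{\|s\|}\Big),\quad\tau^z:=\mathrm{proj}\Big(\frac{\|z\|^2}{\rho}\Big),\quad\tau^u:=\mathrm{proj}\Big(\frac{\|z\|^2-\lambda}{\rho}\Big),$$ where $\tau^z$ and $\tau^u$ are defined only if $\rho\ne0$. If $\rho>0$, then $0\le\tau^s\le\tau^u\le\tau^z$ and $0\le\tau^s\le\tau^g\le\tau^z$. If $\rho\le0$, then $0\le\tau_{\min}=\tau^s\le\tau^g$.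
   Context: ${\cal X}$ is a real Hilbert space with inner product written $z^Ts$ and induced norm $\|\cdot\|$. *)

(* Defs.v *)
From HB Require Import structures.
From mathcomp Require Import all_boot all_order all_algebra.
From mathcomp Require Import all_classical all_reals ereal.
Set Implicit Arguments. Unset Strict Implicit. Unset Printing Implicit Defensive.
Import Order.TTheory GRing.Theory Num.Theory.
Local Open Scope ring_scope.

Definition is_inner_product (R : realType) (V : lmodType R) (ip : V -> V -> R) : Prop :=
  [/\ (forall x y, ip x y = ip y x),
      (forall a x y z, ip (a *: x + y) z = a * ip x z + ip y z),
      (forall x, 0 <= ip x x) &
      (forall x, ip x x = 0 -> x = 0)].

Definition ipnorm (R : realType) (V : lmodType R) (ip : V -> V -> R) (x : V) : R :=
  Num.sqrt (ip x x).

Definition proj (R : realType) (tmin : R) (tmax : \bar R) (t : R) : \bar R :=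
  Order.min (Order.max t tmin)%:E tmax.

Definition lam (R : realType) (V : lmodType R) (ip : V -> V -> R) (s z : V) : R :=
  let ns := ipnorm ip s in let nz := ipnorm ip z in let rho := ip z s in
  (ns ^+ 2 + nz ^+ 2 - Num.sqrt ((ns ^+ 2 - nz ^+ 2) ^+ 2 + 4 * rho ^+ 2)) / 2.

Definition tau_s (R : realType) (V : lmodType R) (ip : V -> V -> R)
  (tmin : R) (tmax : \bar R) (s z : V) : \bar R :=
  @proj R tmin tmax (ip z s / ipnorm ip s ^+ 2).
Definition tau_g (R : realType) (V : lmodType R) (ip : V -> V -> R)
  (tmin : R) (tmax : \bar R) (s z : V) : \bar R :=
  @proj R tmin tmax (@ipnorm R V ip z / ipnorm ip s).
(* tau_z, tau_u only meaningful when rho <> 0 *)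
Definition tau_z (R : realType) (V : lmodType R) (ip : V -> V -> R)
  (tmin : R) (tmax : \bar R) (s z : V) : \bar R :=
  @proj R tmin tmax (@ipnorm R V ip z ^+ 2 / ip z s).
Definition tau_u (R : realType) (V : lmodType R) (ip : V -> V -> R)
  (tmin : R) (tmax : \bar R) (s z : V) : \bar R :=
  @proj R tmin tmax ((@ipnorm R V ip z ^+ 2 - lam ip s z) / ip z s).

(* Main.v *)
Require Import Defs.
From HB Require Import structures.
From mathcomp Require Import all_boot all_order all_algebra.
From mathcomp Require Import all_classical all_reals ereal.
From mathcomp Require Import ring lra.
Import Order.TTheory GRing.Theory Num.Theory.
Local Open Scope ring_scope.
Local Open Scope ereal_scope.

Lemma proj_mono (R : realType) (tmin : R) (tmax : \bar R) (x y : R) :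
  (x <= y)%R -> Defs.proj tmin tmax x <= Defs.proj tmin tmax y.
Proof.
move=> xy; rewrite /Defs.proj; apply: le_min2 => //.
by rewrite lee_fin; apply: le_max2.
Qed.

Lemma proj_ge (R : realType) (tmin : R) (tmax : \bar R) (x : R) :
  tmin%:E <= tmax -> tmin%:E <= Defs.proj tmin tmax x.
Proof.
move=> h; rewrite /Defs.proj le_min h andbT lee_fin le_max lexx orbT //.
Qed.

Lemma proj_low (R : realType) (tmin : R) (tmax : \bar R) (x : R) :
  tmin%:E <= tmax -> (x <= tmin)%R -> Defs.proj tmin tmax x = tmin%:E.
Proof.
move=> h hx; rewrite /Defs.proj (max_r hx).
by apply/min_l.
Qed.

Lemma cs (R : realType) (V : lmodType R) (ip : V -> V -> R) (s z : V) :
  is_inner_product ip -> (0 < ip s s)%R ->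
  (ip z s ^+ 2 <= ip s s * ip z z)%R.
Proof.
case=> sym lin pos _ hs.
set t := (ip z s / ip s s)%R.
have h := pos ((- t) *: s + z)%R.
rewrite lin (sym s) (sym z) !lin (sym s z) in h.
have e : (ip s s * t = ip z s)%R by rewrite /t mulrC -mulrA mulVf ?gt_eqF // mulr1.
nra.
Qed.

Lemma real_part (R : realType) (ns nz r : R) :
  (0 < ns)%R -> (0 <= nz)%R -> (r ^+ 2 <= ns ^+ 2 * nz ^+ 2)%R ->
  let D := Num.sqrt ((ns ^+ 2 - nz ^+ 2) ^+ 2 + 4 * r ^+ 2) in
  let lm := ((ns ^+ 2 + nz ^+ 2 - D) / 2)%R in
  [/\ (r <= ns * nz)%R, (0 <= lm)%R, (lm <= nz ^+ 2)%R &
      (ns ^+ 2 * lm <= ns ^+ 2 * nz ^+ 2 - r ^+ 2)%R].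
Proof.
move=> hs hz hr D lm.
have hD0 : (0 <= D)%R by apply: sqrtr_ge0.
have hD2 : (D ^+ 2 = (ns ^+ 2 - nz ^+ 2) ^+ 2 + 4 * r ^+ 2)%R.
  by rewrite sqr_sqrtr // addr_ge0 ?sqr_ge0 // mulr_ge0 ?sqr_ge0.
have hDle : (D <= ns ^+ 2 + nz ^+ 2)%R.
  rewrite leNgt; apply/negP => H.
  have : (0 < (D - (ns ^+ 2 + nz ^+ 2)) * (D + (ns ^+ 2 + nz ^+ 2)))%R.
    apply: mulr_gt0; nra.
  nra.
have hDge : (ns ^+ 2 - nz ^+ 2 <= D)%R.
  rewrite leNgt; apply/negP => H.
  have : (0 < ((ns ^+ 2 - nz ^+ 2) - D) * ((ns ^+ 2 - nz ^+ 2) + D))%R.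
    apply: mulr_gt0; nra.
  nra.
have hl : (lm * 2 = ns ^+ 2 + nz ^+ 2 - D)%R by rewrite /lm mulfVK //; lra.
have hq : (lm ^+ 2 - (ns ^+ 2 + nz ^+ 2) * lm + ns ^+ 2 * nz ^+ 2 - r ^+ 2 = 0)%R.
  clearbody D; rewrite /lm.
  have -> : (((ns ^+ 2 + nz ^+ 2 - D) / 2) ^+ 2 - (ns ^+ 2 + nz ^+ 2) * ((ns ^+ 2 + nz ^+ 2 - D) / 2) + ns ^+ 2 * nz ^+ 2 - r ^+ 2
     = (D ^+ 2 - ((ns ^+ 2 - nz ^+ 2) ^+ 2 + 4 * r ^+ 2)) / 4)%R by field.
  by rewrite hD2 subrr mul0r.
have l0 : (0 <= lm)%R by lra.
have l1 : (lm <= nz ^+ 2)%R by lra.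
split => //.
- rewrite leNgt; apply/negP => H.
  have hp : (0 <= ns * nz)%R by apply: mulr_ge0 => //; apply: ltW.
  have : (0 < (r - ns * nz) * (r + ns * nz))%R by apply: mulr_gt0; lra.
  nra.
- have : (0 <= lm * (nz ^+ 2 - lm))%R by apply: mulr_ge0; lra.
  nra.
Qed.

Lemma divle (R : realType) (x y q d : R) :
  (0 < q)%R -> (0 < d)%R -> (x * d <= y * q)%R -> (x / q <= y / d)%R.
Proof.
move=> hq hd h; rewrite ler_pdivlMr // mulrAC ler_pdivrMr //.
Qed.

Theorem lemma3p2 (R : realType) (V : lmodType R) (ip : V -> V -> R)
  (tmin : R) (tmax : \bar R) (s z : V) :
  is_inner_product ip ->
  (0 <= tmin)%R -> tmin%:E <= tmax ->
  s <> 0%R ->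
  ((0 < ip z s)%R ->
     [/\ 0 <= tau_s ip tmin tmax s z,
         tau_s ip tmin tmax s z <= tau_u ip tmin tmax s z,
         tau_u ip tmin tmax s z <= tau_z ip tmin tmax s z,
         tau_s ip tmin tmax s z <= tau_g ip tmin tmax s z &
         tau_g ip tmin tmax s z <= tau_z ip tmin tmax s z]) /\
  ((ip z s <= 0)%R ->
     [/\ 0 <= tmin%:E, tmin%:E = tau_s ip tmin tmax s z &
         tau_s ip tmin tmax s z <= tau_g ip tmin tmax s z]).

Proof.
move=> hip htmin htt hs0.
have [sym lin pos def] := hip.
set ns := ipnorm ip s; set nz := ipnorm ip z; set r := ip z s.
have ea : (ns ^+ 2 = ip s s)%R by rewrite /ns /ipnorm sqr_sqrtr.
have eb : (nz ^+ 2 = ip z z)%R by rewrite /nz /ipnorm sqr_sqrtr.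
have hz : (0 <= nz)%R by apply: sqrtr_ge0.
have ha : (0 < ip s s)%R.
  by rewrite lt_neqAle pos andbT eq_sym; apply/eqP => /def.
have hs : (0 < ns)%R by rewrite /ns /ipnorm sqrtr_gt0.
have hc := @cs R V ip s z hip ha.
rewrite -ea -eb -/r in hc.
have [h1 h2 h3 h4] := @real_part R ns nz r hs hz hc.
have ge0 : forall x, 0 <= Defs.proj tmin tmax x.
  by move=> x; apply: le_trans (@proj_ge R tmin tmax x htt); rewrite lee_fin.
split => hr.
- have hns2 : (0 < ns ^+ 2)%R by apply: exprn_gt0.
  rewrite /tau_s /tau_u /tau_z /tau_g /lam -/ns -/nz -/r.
  set lm := ((ns ^+ 2 + nz ^+ 2 - _) / 2)%R in h2 h3 h4 *.
  split.
  + exact: ge0.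
  + apply: (@proj_mono R tmin tmax); apply: (@divle R) => //. nra.
  + apply: (@proj_mono R tmin tmax); apply: (@divle R) => //. nra.
  + apply: (@proj_mono R tmin tmax); apply: (@divle R) => //. nra.
  + apply: (@proj_mono R tmin tmax); apply: (@divle R) => //. nra.
- rewrite /tau_s /tau_g -/ns -/nz -/r.
  have hx : (r / ns ^+ 2 <= 0)%R.
    by rewrite pmulr_lle0 ?invr_gt0 ?exprn_gt0.
  split.
  + by rewrite lee_fin.
  + by rewrite (@proj_low R tmin tmax) //; apply: le_trans hx htmin.
  + apply: (@proj_mono R tmin tmax); apply: le_trans hx _; exact: divr_ge0 (ltW hs).
Qed.
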